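(* Let $(E,C)$ be a separated graph with $E^0$ and $E^1$ countable, let $S\subseteq C_{fin}$ and let $K$ be a field. Then there exist an interval (possibly unbounded) $\mathfrak{X}\subseteq\mathbb{R}$ and an $(E,C,S)$-algebraic branching system $(\mathfrak{X},\{R_e\}_{e\in E^1},\{D_v\}_{v\in E^0},\{f_e\}_{e\in E^1})$ satisfying, for every non-sink $v$: (i) $R_e\cap R_f\neq\emptyset$ for $e\in X$, $f\in Y$, $X,Y\in C_v$, $X\neq Y$; (ii) $\bigcup_{e\in X}R_e\subsetneq D_v$ for each $X\in C_v\setminus S$; (iii) $\bigcup_{e\in X}R_e\neq\bigcup_{f\in Y}R_f$ for $X,Y\in C_v\setminus S$, $X\neq Y$; together with a $K$-algebra homomorphism $\pi:L_K(E,C,S)\to \mathrm{Hom}_K(M)$, where $M$ is the $K$-module of all functions $\mathfrak{X}\to K$, such that for all $\phi\in M$, $v\in E^0$, $e\in E^1$: $$\pi(v)(\phi)=\chi_{D_v}\cdot\phi,\qquad \pi(e)(\phi)=\chi_{R_e}\cdot \phi\circ f_e^{-1},\qquad \pi(e^* )(\phi)=\chi_{D_{r(e)}}\cdot\phi\circ f_e.$$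
   Context: A separated graph is a pair $(E,C)$ where $E=(E^0,E^1,r,s)$ is a directed graph and $C=\bigcup_{v\in E^0}C_v$, where for each non-sink $v$, $C_v$ is a partition of $s^{-1}(v)$ into pairwise disjoint nonempty sets; $C_{fin}$ is the set of finite $Y\in C$. For $S\subseteq C_{fin}$ and a field $K$, the Cohn-Leavitt algebra $L_K(E,C,S)$ is the universal $K$-algebra generated by pairwise orthogonal idempotents $\{v:v\in E^0\}$ and elements $\{e,e^*:e\in E^1\}$ subject to: $s(e)e=er(e)=e$; $r(e)e^*=e^*s(e)=e^*$; $e^*f=\delta_{e,f}r(e)$ for $e,f\in Y$, $Y\in C$; $v=\sum_{e\in X}ee^*$ for every $X\in S\cap C_v$, $v$ non-sink. An $(E,C,S)$-algebraic branching system is a set $\mathfrak{X}$ with subsets $\{R_e\}_{e\in E^1}$, $\{D_v\}_{v\in E^0}$ and maps $f_e$ such that: $R_e\cap R_d=\emptyset$ for distinct $d,e$ in a common $Y\in C$; the $D_v$ are pairwise disjoint; $R_e\subseteq D_{s(e)}$; $D_v=\bigcup_{e\in Y}R_e$ whenever $Y\in S\cap C_v$; each $f_e:D_{r(e)}\to R_e$ is a bijection. Notation: $\chi_{R_e}\cdot\phi\circ f_e^{-1}$ denotes the function equal to $\phi(f_e^{-1}(x))$ for $x\in R_e$ and $0$ otherwise; $\chi_{D_{r(e)}}\cdot\phi\circ f_e$ denotes the function equal to $\phi(f_e(x))$ for $x\in D_{r(e)}$ and $0$ otherwise; $\chi_{D_v}$ is the characteristic function of $D_v$. *)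

(* Defs.v *)
From HB Require Import structures.
From mathcomp Require Import all_boot all_order all_algebra.
From mathcomp Require Import boolp classical_sets functions cardinality fsbigop.
From Stdlib Require Import Reals.

Set Implicit Arguments.
Unset Strict Implicit.
Unset Printing Implicit Defensive.
Import Order.TTheory GRing.Theory.
Local Open Scope classical_set_scope.
Local Open Scope ring_scope.

Record nuAlg (K : fieldType) := NuAlg {
  nua_sort :> lmodType K;
  nua_mul : nua_sort -> nua_sort -> nua_sort;
  nua_mulA : associative nua_mul;
  nua_mulDl : left_distributive nua_mul +%R;
  nua_mulDr : right_distributive nua_mul +%R;
  nua_mulZl : forall (k : K) (x y : nua_sort), nua_mul (k *: x) y = k *: nua_mul x y;
  nua_mulZr : forall (k : K) (x y : nua_sort), nua_mul x (k *: y) = k *: nua_mul x y }.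

Definition nua_hom (K : fieldType) (A B : nuAlg K) (h : A -> B) : Prop :=
  [/\ {morph h : x y / x + y},
      (forall (k : K) (x : A), h (k *: x) = k *: h x) &
      {morph h : x y / nua_mul x y >-> nua_mul x y}].

Section SepGraph.
Variables (E0 E1 : countType) (s r : E1 -> E0).

Definition is_sink (v : E0) : Prop := forall e, s e <> v.

(* (E,C) separated graph, C given vertexwise by Cv : E0 -> set (set E1). *)
Definition separated (Cv : E0 -> set (set E1)) : Prop :=
  forall v,
    (is_sink v -> Cv v = set0) /\
    (~ is_sink v ->
       [/\ (forall X, Cv v X -> X !=set0),
           (forall X Y, Cv v X -> Cv v Y -> X <> Y -> X `&` Y = set0) &
           \bigcup_(X in Cv v) X = s @^-1` [set v]]).

Definition Cset (Cv : E0 -> set (set E1)) : set (set E1) := \bigcup_(v in setT) Cv v.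

Definition Cfin (Cv : E0 -> set (set E1)) : set (set E1) :=
  [set X | Cset Cv X /\ finite_set X].

Variables (K : fieldType) (Cv : E0 -> set (set E1)) (S : set (set E1)).

Definition CL_relations (B : nuAlg K) (pv : E0 -> B) (pe ps : E1 -> B) : Prop :=
  [/\ (forall v w, nua_mul (pv v) (pv w) = if v == w then pv v else 0),
      (forall e, nua_mul (pv (s e)) (pe e) = pe e /\ nua_mul (pe e) (pv (r e)) = pe e),
      (forall e, nua_mul (pv (r e)) (ps e) = ps e /\ nua_mul (ps e) (pv (s e)) = ps e),
      (forall Y e f, Cset Cv Y -> Y e -> Y f ->
          nua_mul (ps e) (pe f) = if e == f then pv (r e) else 0) &
      (forall v X, ~ is_sink v -> S X -> Cv v X ->
          pv v = \sum_(e \in X) nua_mul (pe e) (ps e))].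

Definition is_CohnLeavitt (A : nuAlg K) (av : E0 -> A) (ae as_ : E1 -> A) : Prop :=
  CL_relations av ae as_ /\
  forall (B : nuAlg K) (pv : E0 -> B) (pe ps : E1 -> B),
    CL_relations pv pe ps ->
    exists h : A -> B,
      [/\ nua_hom h, (forall v, h (av v) = pv v), (forall e, h (ae e) = pe e),
          (forall e, h (as_ e) = ps e) &
          forall h' : A -> B, nua_hom h' -> (forall v, h' (av v) = pv v) ->
            (forall e, h' (ae e) = pe e) -> (forall e, h' (as_ e) = ps e) ->
            h' =1 h].

Definition branching_system (T : Type) (Rs : E1 -> set T) (D : E0 -> set T)
    (f : E1 -> T -> T) : Prop :=
  [/\ (forall Y d e, Cset Cv Y -> Y d -> Y e -> d <> e -> Rs d `&` Rs e = set0),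
      (forall v w, v <> w -> D v `&` D w = set0),
      (forall e, Rs e `<=` D (s e)),
      (forall v Y, ~ is_sink v -> S Y -> Cv v Y -> D v = \bigcup_(e in Y) Rs e) &
      (forall e, set_bij (D (r e)) (Rs e) (f e))].

End SepGraph.

Definition chi (T : Type) (K : fieldType) (A : set T) (x : T) : K :=
  if `[< A x >] then 1 else 0.

Definition is_real_interval (X : set R) : Prop :=
  forall x y z, X x -> X y -> (x <= z <= y)%R -> X z.

(* Main.v *)
Require Import Defs.
From HB Require Import structures.
From mathcomp Require Import all_boot all_order all_algebra.
From mathcomp Require Import boolp classical_sets functions cardinality fsbigop.
From mathcomp Require Import finmap.
From Stdlib Require Import Reals.
Import GRing.Theory.
Local Open Scope classical_set_scope.
Local Open Scope ring_scope.
Set Implicit Arguments.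
Unset Strict Implicit.

Section Comb.
Variables (E0 E1 : countType) (s r : E1 -> E0) (Cv : E0 -> set (set E1)) (S : set (set E1)).
Hypothesis HC : separated s Cv.

Lemma nonsink_of v X : Cv v X -> ~ is_sink s v.
Proof. by move=> CX sk; have [H _] := HC v; rewrite (H sk) in CX. Qed.

Lemma class_src v X e : Cv v X -> X e -> s e = v.
Proof.
move=> CX Xe; have [_ /(_ (nonsink_of CX))[_ _ Hcup]] := HC v.
have : (\bigcup_(Y in Cv v) Y) e by exists X.
by rewrite Hcup.
Qed.

Lemma class_uniq v X Y e : Cv v X -> Cv v Y -> X e -> Y e -> X = Y.
Proof.
move=> CX CY Xe Ye; have [_ /(_ (nonsink_of CX))[_ Hd _]] := HC v.
apply: contrapT => XY; have := Hd _ _ CX CY XY.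
by move/seteqP => [/(_ e (conj Xe Ye))].
Qed.

Lemma Cset_ex Y : Cset Cv Y -> exists v, Cv v Y.
Proof. by case=> v _ H; exists v. Qed.

Fixpoint fst_in (X : set E1) (l : seq E1) : option E1 :=
  match l with
  | [::] => None
  | x :: l' => if `[< X x >] then Some x else fst_in X l'
  end.

Lemma fst_inP X l x : fst_in X l = Some x -> X x.
Proof.
elim: l => //= y l IH; case: (boolP `[< X y >]) => [/asboolP Xy [<-] //|_]; exact: IH.
Qed.

Lemma fst_in_in X x l : X x -> fst_in X (x :: l) = Some x.
Proof. by move=> Xx /=; rewrite asboolT. Qed.

Lemma fst_in_out X x l : ~ X x -> fst_in X (x :: l) = fst_in X l.
Proof. by move=> Xx /=; rewrite asboolF. Qed.

Definition choice_of (X : set E1) : option E1 :=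
  match pselect (X !=set0) with
  | left h => Some (proj1_sig (cid h))
  | right _ => None
  end.

Lemma choice_ofP X x : choice_of X = Some x -> X x.
Proof.
rewrite /choice_of; case: pselect => // h [<-]; exact: proj2_sig (cid h).
Qed.

Lemma choice_of_some X : X !=set0 -> exists x, choice_of X = Some x.
Proof. by rewrite /choice_of; case: pselect => // h _; eexists. Qed.

Definition labX (X : set E1) (l : seq E1) : option E1 :=
  match fst_in X l with
  | Some x => Some x
  | None => if `[< S X >] then choice_of X else None
  end.

Lemma labXP X l x : labX X l = Some x -> X x.
Proof.
rewrite /labX; case E: fst_in => [y|]; first by move=> [<-]; exact: fst_inP E.
by case: ifP => // _; exact: choice_ofP.
Qed.

Lemma labX_cover X l : X !=set0 -> S X -> exists x, labX X l = Some x.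
Proof.
move=> XN SX; rewrite /labX; case: fst_in => [y|]; first by exists y.
by rewrite asboolT //; exact: choice_of_some.
Qed.

Lemma labX_nil X : ~ S X -> labX X [::] = None.
Proof. by move=> NS; rewrite /labX /= asboolF. Qed.

Local Notation T := (E0 * nat * seq E1)%type.

Definition Rp (e : E1) : set T :=
  [set p | p.1.1 = s e /\ exists2 X, Cv (s e) X & X e /\ labX X p.2 = Some e].
Definition Dp (v : E0) : set T := [set p | p.1.1 = v].

Lemma Rp_class v X e p : Cv v X -> X e ->
  (Rp e p <-> p.1.1 = v /\ labX X p.2 = Some e).
Proof.
move=> CX Xe; have se := class_src CX Xe; split.
- case=> -> [Y CY [Ye L]]; rewrite se in CY *; split => //.
  by rewrite (class_uniq CX CY Xe Ye).
- by case=> p1 L; split; [rewrite se|exists X; rewrite ?se].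
Qed.


Lemma Rp_disj Y d e : Cset Cv Y -> Y d -> Y e -> d <> e -> Rp d `&` Rp e = set0.
Proof.
move=> /Cset_ex[w CY] Yd Ye de; apply/seteqP; split=> // p [].
move=> /(Rp_class _ CY Yd)[_ Ld] /(Rp_class _ CY Ye)[_ Le].
by apply: de; move: Ld; rewrite Le => -[].
Qed.

Lemma Dp_disj v w : v <> w -> Dp v `&` Dp w = set0.
Proof. by move=> vw; apply/seteqP; split=> // p [] H1 H2; apply: vw; rewrite -H1 -H2. Qed.

Lemma Rp_sub e : Rp e `<=` Dp (s e).
Proof. by move=> p []. Qed.

Lemma Dp_cov v Y : ~ is_sink s v -> S Y -> Cv v Y -> Dp v = \bigcup_(e in Y) Rp e.
Proof.
move=> ns SY CY; apply/seteqP; split => p.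
- move=> pv; have [_ /(_ ns)[HN _ _]] := HC v.
  have [x Lx] := labX_cover p.2 (HN _ CY) SY.
  have Yx := labXP Lx.
  by exists x => //; apply/(Rp_class _ CY Yx).
- by case=> e Ye /(Rp_class _ CY Ye)[].
Qed.

Lemma Rp_i v X1 Y1 e f : Cv v X1 -> Cv v Y1 -> X1 <> Y1 -> X1 e -> Y1 f ->
  Rp e `&` Rp f !=set0.
Proof.
move=> CX CY XY Xe Yf; exists (v, 0%N, [:: e; f]); split.
- by apply/(Rp_class _ CX Xe); split => //; rewrite /labX fst_in_in.
- apply/(Rp_class _ CY Yf); split => //; rewrite /labX fst_in_out ?fst_in_in //.
  by move=> Ye; apply: XY; exact: class_uniq CX CY Xe Ye.
Qed.

Lemma Rp_ii v X1 : Cv v X1 -> ~ S X1 -> \bigcup_(e in X1) Rp e `<` Dp v.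
Proof.
move=> CX NS; split.
- by case=> [[a n] l] [e Xe /(Rp_class _ CX Xe)[]].
- move=> /(_ (v, 0%N, [::]) erefl) [e Xe /(Rp_class _ CX Xe)[_]].
  by rewrite labX_nil.
Qed.

Lemma Rp_iii v X1 Y1 : Cv v X1 -> Cv v Y1 -> ~ S X1 -> ~ S Y1 -> X1 <> Y1 ->
  \bigcup_(e in X1) Rp e <> \bigcup_(e in Y1) Rp e.
Proof.
move=> CX CY NX NY XY; have [_ /(_ (nonsink_of CY))[HN _ _]] := HC v.
have [f Yf] := HN _ CY.
have nXf : ~ X1 f by move=> Xf; apply: XY; exact: class_uniq CX CY Xf Yf.
move=> /seteqP[_ /(_ (v, 0%N, [:: f]))].
case.
  by exists f => //; apply/(Rp_class _ CY Yf); split => //; rewrite /labX fst_in_in.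
move=> e Xe /(Rp_class _ CX Xe)[_].
by rewrite /labX fst_in_out //= asboolF.
Qed.

End Comb.
Section Endo.
Variables (K : fieldType) (U : Type).
Local Notation MM := (U -> K^o).
Definition linb (F : MM -> MM) : bool :=
  `[< (forall a b, F (a + b) = F a + F b) /\ (forall (k : K) a, F (k *: a) = k *: F a) >].
Lemma linb_closed : subsemimod_closed linb.
Proof.
split; [split|].
- rewrite unfold_in; apply/asboolP; split => [a b|k a]; apply/funext => x /=; by rewrite ?addr0 ?scaler0.
- move=> F G; rewrite !unfold_in => /asboolP[F1 F2] /asboolP[G1 G2]; apply/asboolP; split => [a b|k a];
    apply/funext => x; rewrite !fctE ?F1 ?G1 ?F2 ?G2 !fctE.
  + by rewrite addrACA.
  + by rewrite scalerDr.
- move=> k F; rewrite !unfold_in => /asboolP[F1 F2]; apply/asboolP; split => [a b|c a];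
    apply/funext => x; rewrite !fctE ?F1 ?F2 !fctE.
  + by rewrite scalerDr.
  + by rewrite !scalerA mulrC.
Qed.
HB.instance Definition _ := GRing.isSubmodClosed.Build K (MM -> MM) linb linb_closed.
Definition endo := {F : MM -> MM | linb F}.
HB.instance Definition _ := [isSub for (@sval _ _ : endo -> _)].
HB.instance Definition _ := [Choice of endo by <:].
HB.instance Definition _ := [SubChoice_isSubLmodule of endo by <:].

Lemma lin_add (F : endo) a b : val F (a + b) = val F a + val F b.
Proof. by case: F => F0 /= /asboolP[]. Qed.
Lemma lin_scale (F : endo) k a : val F (k *: a) = k *: val F a.
Proof. by case: F => F0 /= /asboolP[]. Qed.

Lemma comp_lin (F G : endo) : linb (val F \o val G).
Proof. by apply/asboolP; split => [a b|k a] /=; rewrite ?lin_add ?lin_scale. Qed.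
Definition emul (F G : endo) : endo := exist (fun H => linb H) _ (comp_lin F G).

Lemma val_add (F G : endo) : val (F + G) = val F + val G. Proof. by []. Qed.
Lemma val_scale k (F : endo) : val (k *: F) = k *: val F. Proof. by []. Qed.
Lemma val_zero : val (0 : endo) = 0. Proof. by []. Qed.

Lemma emulA : associative emul.
Proof. by move=> F G H; apply: val_inj. Qed.
Lemma emulDl : left_distributive emul +%R.
Proof. by move=> F G H; apply: val_inj. Qed.
Lemma emulDr : right_distributive emul +%R.
Proof. by move=> F G H; apply: val_inj; apply/funext => a /=; rewrite lin_add. Qed.
Lemma emulZl k (F G : endo) : emul (k *: F) G = k *: emul F G.
Proof. by apply: val_inj. Qed.
Lemma emulZr k (F G : endo) : emul F (k *: G) = k *: emul F G.
Proof. by apply: val_inj; apply/funext => a /=; rewrite lin_scale. Qed.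

Definition endoAlg : nuAlg K := NuAlg emulA emulDl emulDr emulZl emulZr.

Definition mul_chi (A : set U) (h : U -> U) : MM -> MM :=
  fun phi x => chi K A x * phi (h x).
Lemma mul_chi_lin A h : linb (mul_chi A h).
Proof.
apply/asboolP; split => [a b|k a]; apply/funext => x; rewrite /mul_chi !fctE.
  by rewrite mulrDr.
by rewrite /GRing.scale /= mulrCA.
Qed.
Definition mchi A h : endo := exist (fun H => linb H) _ (mul_chi_lin A h).

Lemma chi_in (A : set U) x : A x -> chi K A x = 1.
Proof. by move=> Ax; rewrite /chi asboolT. Qed.
Lemma chi_out (A : set U) x : ~ A x -> chi K A x = 0.
Proof. by move=> Ax; rewrite /chi asboolF. Qed.

End Endo.

Section Rel.
Variables (E0 E1 : countType) (s r : E1 -> E0) (Cv : E0 -> set (set E1)) (S : set (set E1)).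
Variables (K : fieldType) (U : Type) (D : E0 -> set U) (Rs : E1 -> set U) (f g : E1 -> U -> U).
Hypothesis HC : separated s Cv.
Hypothesis HSfin : S `<=` Cfin Cv.
Hypothesis HD : forall v w, v <> w -> D v `&` D w = set0.
Hypothesis HRD : forall e, Rs e `<=` D (s e).
Hypothesis Hdisj : forall Y d e, Cset Cv Y -> Y d -> Y e -> d <> e -> Rs d `&` Rs e = set0.
Hypothesis Hcov : forall v Y, ~ is_sink s v -> S Y -> Cv v Y -> D v = \bigcup_(e in Y) Rs e.
Hypothesis Hf : forall e x, D (r e) x -> Rs e (f e x).
Hypothesis Hg : forall e y, Rs e y -> D (r e) (g e y).
Hypothesis Hgf : forall e x, D (r e) x -> g e (f e x) = x.
Hypothesis Hfg : forall e y, Rs e y -> f e (g e y) = y.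



Definition pv v : endoAlg K U := @mchi K U (D v) (fun x => x).
Definition pe e : endoAlg K U := @mchi K U (Rs e) (g e).
Definition ps e : endoAlg K U := @mchi K U (D (r e)) (f e).

Lemma disj_mem (A B : set U) x : A `&` B = set0 -> A x -> B x -> False.
Proof. by move=> /seteqP[/(_ x) H _] Ax Bx; exact: H. Qed.

Ltac chicase A x := case: (pselect (A x)) => [hA|hA];
  [rewrite (@chi_in _ _ A x) //| rewrite (@chi_out _ _ A x) //].

Lemma CL_endo : CL_relations s r Cv S pv pe ps.
Proof.
split.
- move=> v w; case: eqP => [<-|vw]; apply: val_inj; apply/funext => phi;
    apply/funext => x; rewrite /= /mul_chi.
  + by chicase (D v) x; rewrite ?mul1r ?mul0r.
  + idtac; chicase (D v) x; rewrite ?mul1r ?mul0r //.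
    rewrite chi_out ?mul0r //; move=> Dw; exact: (disj_mem (HD vw) hA Dw).
- move=> e; split; apply: val_inj; apply/funext => phi;
    apply/funext => x; rewrite /= /mul_chi.
  + chicase (Rs e) x; rewrite ?mul1r ?mul0r ?mulr0 //.
    by rewrite chi_in ?mul1r //; exact: HRD.
  + chicase (Rs e) x; rewrite ?mul1r ?mul0r ?mulr0 //.
    by rewrite chi_in ?mul1r //; exact: Hg.
- move=> e; split; apply: val_inj; apply/funext => phi;
    apply/funext => x; rewrite /= /mul_chi.
  + by chicase (D (r e)) x; rewrite ?mul1r ?mul0r.
  + chicase (D (r e)) x; rewrite ?mul1r ?mul0r ?mulr0 //.
    by rewrite chi_in ?mul1r //; apply: HRD; exact: Hf.
- move=> Y d e CY Yd Ye; case: eqP => [<-|de]; apply: val_inj; apply/funext => phi;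
    apply/funext => x; rewrite /= /mul_chi.
  + chicase (D (r d)) x; rewrite ?mul1r ?mul0r //.
    by rewrite chi_in ?mul1r ?Hgf //; exact: Hf.
  + idtac; chicase (D (r d)) x; rewrite ?mul1r ?mul0r //.
    rewrite chi_out ?mul0r // => Rx.
    by apply: (disj_mem (Hdisj CY Yd Ye de)) Rx; exact: Hf.
- move=> v X ns SX CX; have [_ Xfin] := HSfin SX.
  rewrite fsbig_finite //; apply: val_inj.
  have -> : forall l, val (\sum_(e <- l) (nua_mul (pe e) (ps e) : endoAlg K U))
      = \sum_(e <- l) val (nua_mul (pe e) (ps e) : endoAlg K U).
    by move=> l; elim/big_rec2: _ => // e a b _ <-.
  apply/funext => phi; rewrite fct_sumE; apply/funext => x; rewrite fct_sumE /= /mul_chi.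
  have se e : X e -> s e = v.
    move=> Xe; exact: (class_src HC CX Xe).
  have term e : chi K (Rs e) x * (chi K (D (r e)) (g e x) * phi (f e (g e x)))
      = chi K (Rs e) x * phi x.
    chicase (Rs e) x; last by rewrite !mul0r.
    by rewrite !mul1r chi_in ?mul1r ?Hfg //; exact: Hg.
  under eq_bigr do rewrite term.
  case: (pselect (D v x)) => Dx.
  + have [e0 Xe0 R0] : (\bigcup_(e in X) Rs e) x by rewrite -(Hcov ns SX CX).
    have e0in : e0 \in fset_set X by rewrite in_fset_set //; apply/mem_set.
    rewrite (bigD1_seq e0) //= ?fset_uniq // big1_seq ?addr0.
      by rewrite !chi_in.
    move=> e /andP[ne ein]; rewrite chi_out ?mul0r // => Re.
    have Xe : X e by move: ein; rewrite in_fset_set // => /set_mem.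
    apply: (disj_mem (Hdisj _ Xe0 Xe _)) R0 Re => //.
      by exists v.
    by move=> h; move: ne; rewrite h eqxx.
  + rewrite chi_out // mul0r big1_seq // => e /andP[_ ein].
    have Xe : X e by move: ein; rewrite in_fset_set // => /set_mem.
    rewrite chi_out ?mul0r // => Re; apply: Dx; rewrite -(se e Xe); exact: HRD.
Qed.
End Rel.
Lemma inf_of_inj (U : Type) (A : set U) (g : nat -> U) :
  injective g -> (forall n, A (g n)) -> infinite_set A.
Proof.
move=> gi gA fA.
have : finite_set (g @^-1` A) by apply: finite_preimage => // x y _ _; exact: gi.
rewrite (_ : g @^-1` A = setT); first exact: infinite_nat.
by apply/seteqP; split=> // n _; exact: gA.
Qed.

Lemma card_transfer (T : countType) U (i : T -> U) (A B : set T) (gA gB : nat -> T) :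
  injective i -> injective gA -> injective gB ->
  (forall n, A (gA n)) -> (forall n, B (gB n)) -> (i @` A #= i @` B)%card.
Proof.
move=> ii iA iB HA HB.
have cA : countable (i @` A) by apply: card_le_trans (card_image_le i A) (countableP A).
have cB : countable (i @` B) by apply: card_le_trans (card_image_le i B) (countableP B).
have fA : infinite_set (i @` A).
  by apply: (@inf_of_inj _ _ (i \o gA)) => [x y /ii/iA|n] //; exists (gA n).
have fB : infinite_set (i @` B).
  by apply: (@inf_of_inj _ _ (i \o gB)) => [x y /ii/iB|n] //; exists (gB n).
apply: card_eq_trans (eq_card_nat cA fA) _.
by rewrite card_eq_sym; exact: eq_card_nat.
Qed.

Lemma bij_ex U (A B : set U) : (A #= B)%card ->
  exists f g : U -> U, [/\ forall x, A x -> B (f x), forall y, B y -> A (g y),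
     forall x, A x -> g (f x) = x & forall y, B y -> f (g y) = y].
Proof.
move=> /card_bijP[F [G FG GF]].
pose f x := match pselect (A x) with left h => val (F (SigSub (mem_set h))) | right _ => x end.
pose g y := match pselect (B y) with left h => val (G (SigSub (mem_set h))) | right _ => y end.
have fA x (h : A x) : f x = val (F (SigSub (mem_set h))).
  rewrite /f; case: pselect => // h'; congr (val (F _)); exact: val_inj.
have gB y (h : B y) : g y = val (G (SigSub (mem_set h))).
  rewrite /g; case: pselect => // h'; congr (val (G _)); exact: val_inj.
have fB x : A x -> B (f x) by move=> h; rewrite (fA x h); exact: set_mem (valP _).
have gA' y : B y -> A (g y) by move=> h; rewrite (gB y h); exact: set_mem (valP _).
exists f, g; split => // [x h|y h].
- rewrite (gB _ (fB x h)); rewrite (_ : SigSub _ = F (SigSub (mem_set h))).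
    by rewrite FG.
  by apply: val_inj; rewrite /= (fA x h).
- rewrite (fA _ (gA' y h)); rewrite (_ : SigSub _ = G (SigSub (mem_set h))).
    by rewrite GF.
  by apply: val_inj; rewrite /= (gB y h).
Qed.




Lemma class_exists (E0 E1 : countType) (s : E1 -> E0) (Cv : E0 -> set (set E1)) e :
  separated s Cv -> exists2 X, Cv (s e) X & X e.
Proof.
move=> HC; have ns : ~ is_sink s (s e) by move=> /(_ e).
have [_ /(_ ns)[_ _ Hcup]] := HC (s e).
have : (s @^-1` [set s e]) e by [].
by rewrite -Hcup => -[X CX Xe]; exists X.
Qed.

Unset Implicit Arguments.
Set Strict Implicit.

Theorem corollary3p4 (E0 E1 : countType) (s r : E1 -> E0)
    (Cv : E0 -> set (set E1)) (S : set (set E1)) (K : fieldType)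
    (HC : separated s Cv) (HS : S `<=` Cfin Cv)
    (L : nuAlg K) (lv : E0 -> L) (le ls : E1 -> L)
    (HL : is_CohnLeavitt s r Cv S lv le ls) :
  exists (X : set R) (Rs : E1 -> set {x : R | X x}) (D : E0 -> set {x : R | X x})
         (f : E1 -> {x : R | X x} -> {x : R | X x})
         (pi : L -> ({x : R | X x} -> K) -> ({x : R | X x} -> K)),
    [/\ is_real_interval X,
        branching_system s r Cv S Rs D f,
        (forall v, ~ is_sink s v ->
          [/\ (forall (X1 Y1 : set E1) (e f' : E1), Cv v X1 -> Cv v Y1 -> X1 <> Y1 ->
                 X1 e -> Y1 f' -> Rs e `&` Rs f' !=set0),
              (forall X1, Cv v X1 -> ~ S X1 -> \bigcup_(e in X1) Rs e `<` D v) &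
              (forall X1 Y1, Cv v X1 -> Cv v Y1 -> ~ S X1 -> ~ S Y1 -> X1 <> Y1 ->
                 \bigcup_(e in X1) Rs e <> \bigcup_(e in Y1) Rs e)]),
        [/\ (forall a phi psi, pi a (fun x => phi x + psi x) = (fun x => pi a phi x + pi a psi x)),
            (forall a (k : K) phi, pi a (fun x => k * phi x) = (fun x => k * pi a phi x)),
            (forall a b phi, pi (a + b) phi = (fun x => pi a phi x + pi b phi x)),
            (forall (k : K) a phi, pi (k *: a) phi = (fun x => k * pi a phi x)) &
            (forall a b phi, pi (nua_mul a b) phi = pi a (pi b phi))] &
        [/\ (forall v phi, pi (lv v) phi = (fun x => chi K (D v) x * phi x)),
            (forall e phi, (forall y, D (r e) y -> pi (le e) phi (f e y) = phi y) /\
                           (forall x, ~ Rs e x -> pi (le e) phi x = 0)) &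
            (forall e phi, pi (ls e) phi = (fun x => chi K (D (r e)) x * phi (f e x)))]].
Proof.
pose U := {x : R | (setT : set R) x}.
pose i (t : (E0 * nat * seq E1)%type) : U := exist _ (INR (choice.pickle t)) I.
have ii : injective i.
  move=> t1 t2 H; have /= /INR_eq := congr1 (@proj1_sig _ _) H.
  exact: (pcan_inj choice.pickleK).
pose Rs e := i @` Rp s Cv S e.
pose D v := i @` Dp v.
have img_disj (A B : set (E0 * nat * seq E1)%type) :
    A `&` B = set0 -> i @` A `&` i @` B = set0.
  move=> AB; apply/seteqP; split => // _ [[a Aa <-] [b Bb]] /ii ba.
  by move/seteqP: AB => [/(_ a) H _]; apply: H; split => //; rewrite -ba.
have img_cup (Y : set E1) : \bigcup_(e in Y) Rs e = i @` \bigcup_(e in Y) Rp s Cv S e.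
  by rewrite image_bigcup.
have img_eq (A B : set (E0 * nat * seq E1)%type) : i @` A = i @` B -> A = B.
  move=> AB; apply/seteqP; split => t At.
    have : (i @` B) (i t) by rewrite -AB; exists t.
    by rewrite image_inj.
  have : (i @` A) (i t) by rewrite AB; exists t.
  by rewrite image_inj.
have card e : (D (r e) #= Rs e)%card.
  have [X0 CX Xe] := class_exists e HC.
  apply: (@card_transfer _ _ i _ _ (fun n => (r e, n, [::])) (fun n => (s e, n, [:: e]))) => //.
  - by move=> n m [].
  - by move=> n m [].
  - by move=> n; apply/(Rp_class S HC _ CX Xe); split => //; rewrite /labX fst_in_in.
have H1 : forall e, exists f0 : U -> U, exists g0 : U -> U,
    [/\ forall x, D (r e) x -> Rs e (f0 x), forall y, Rs e y -> D (r e) (g0 y),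
     forall x, D (r e) x -> g0 (f0 x) = x & forall y, Rs e y -> f0 (g0 y) = y].
  by move=> e; exact: bij_ex (card e).
have [f Hf1] := boolp.choice H1.
have [g Hg] := boolp.choice Hf1.
have Hfa e x : D (r e) x -> Rs e (f e x) by case: (Hg e) => A _ _ _; exact: A.
have Hga e y : Rs e y -> D (r e) (g e y) by case: (Hg e) => _ A _ _; exact: A.
have Hgf e x : D (r e) x -> g e (f e x) = x by case: (Hg e) => _ _ A _; exact: A.
have Hfg e y : Rs e y -> f e (g e y) = y by case: (Hg e) => _ _ _ A; exact: A.
have HB : CL_relations s r Cv S (pv K D) (pe K Rs g) (ps r K D f).
  apply: (CL_endo K) => //.
  - by move=> v w vw; apply: img_disj; exact: Dp_disj.
  - by move=> e; apply/image_subset/Rp_sub.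
  - by move=> Y d e CY Yd Ye de; apply: img_disj; exact: (Rp_disj S HC CY Yd Ye de).
  - by move=> v Y ns SY CY; rewrite img_cup; congr (i @` _); exact: (Dp_cov HC ns SY CY).
have [h [[hD hZ hM] hv he hs _]] := HL.2 _ _ _ _ HB.
exists setT, Rs, D, f, (fun a => val (h a)).
split.
- by [].
- split.
  + by move=> Y d e CY Yd Ye de; apply: img_disj; exact: (Rp_disj S HC CY Yd Ye de).
  + by move=> v w vw; apply: img_disj; exact: Dp_disj.
  + by move=> e; apply/image_subset/Rp_sub.
  + by move=> v Y ns SY CY; rewrite img_cup; congr (i @` _); exact: (Dp_cov HC ns SY CY).
  + move=> e; split.
    * by move=> x; exact: Hfa.
    * by move=> x y /set_mem Dx /set_mem Dy fxy; rewrite -(Hgf e x Dx) fxy Hgf.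
    * by move=> y Ry; exists (g e y); [exact: Hga | exact: Hfg].
- move=> v ns; split.
  + move=> X1 Y1 e f' CX CY XY Xe Yf.
    have [p [Rpe Rpf]] := Rp_i S HC CX CY XY Xe Yf.
    by exists (i p); split; exists p.
  + move=> X1 CX NS; rewrite img_cup.
    have [sub nsub] := Rp_ii HC CX NS.
    split; first exact: image_subset.
    move=> H; apply: nsub => p Dpp.
    have : (i @` \bigcup_(e in X1) Rp s Cv S e) (i p) by apply: H; exists p.
    by rewrite image_inj.
  + move=> X1 Y1 CX CY NX NY XY; rewrite !img_cup => /img_eq.
    exact: (Rp_iii HC CX CY NX NY XY).
- split.
  + move=> a phi psi; have := lin_add (h a) phi psi; rewrite addrfctE => ->.
    by rewrite addrfctE.
  + move=> a k phi; have := lin_scale (h a) k phi; rewrite !scalrfctE.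
    exact.
  + by move=> a b phi; rewrite hD val_add !addrfctE.
  + by move=> k a phi; rewrite hZ val_scale !scalrfctE.
  + by move=> a b phi; rewrite hM.
- split.
  + by move=> v phi; rewrite hv.
  + move=> e phi; rewrite he; split => [y Dy|x Rx] /=; rewrite /mul_chi.
      by rewrite chi_in ?mul1r ?Hgf //; exact: Hfa.
    by rewrite chi_out ?mul0r.
  + by move=> e phi; rewrite hs.
Qed.
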